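(* Let a group $G$ act on a set $X$, and suppose there are subsets $X_1,\dots,X_n\subseteq X$ and elements $h_1,\dots,h_n\in G$ such that, with $X_{n+1}:=X_1$, we have $h_iX_i\subseteq X_{i+1}$ for $1\le i\le n$ and $X=\bigcup_{i=1}^n\left(X_{i+1}\setminus h_iX_i\right)$. Then $G\curvearrowright X$ is paradoxical and $\tau(G\curvearrowright X)\le n+2$.
   Context: A paradoxical decomposition of $G\curvearrowright X$ consists of pairwise disjoint subsets $A_1,\dots,A_p,B_1,\dots,B_q$ of $X$ and elements $g_1,\dots,g_p,k_1,\dots,k_q\in G$ with $X=\bigcup_{i=1}^p g_iA_i=\bigcup_{j=1}^q k_jB_j$; the action is paradoxical if one exists. The Tarski number $\tau(G\curvearrowright X)$ is the minimal number of pieces $p+q$ in such a decomposition, and $\infty$ if none exists. *)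

(* Defs.v *)
From Stdlib Require Import Arith Lia.

Set Implicit Arguments.

Record group_action (X : Type) := GroupAction {
  ga_G : Type;
  ga_mul : ga_G -> ga_G -> ga_G;
  ga_one : ga_G;
  ga_inv : ga_G -> ga_G;
  ga_mulA : forall a b c, ga_mul a (ga_mul b c) = ga_mul (ga_mul a b) c;
  ga_mul1g : forall a, ga_mul ga_one a = a;
  ga_mulg1 : forall a, ga_mul a ga_one = a;
  ga_mulVg : forall a, ga_mul (ga_inv a) a = ga_one;
  ga_mulgV : forall a, ga_mul a (ga_inv a) = ga_one;
  ga_act : ga_G -> X -> X;
  ga_act1 : forall x, ga_act ga_one x = x;
  ga_actM : forall a b x, ga_act (ga_mul a b) x = ga_act a (ga_act b x)
}.

Definition img (X : Type) (A : group_action X) (g : ga_G A) (S : X -> Prop)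
  : X -> Prop := fun x => exists y, S y /\ x = ga_act A g y.

Definition disjoint (X : Type) (S T : X -> Prop) : Prop :=
  forall x, S x -> T x -> False.

Definition paradoxical_decomposition (X : Type) (A : group_action X)
  (p q : nat) (As Bs : nat -> X -> Prop) (gs ks : nat -> ga_G A) : Prop :=
  (forall i j, i < p -> j < p -> i <> j -> disjoint (As i) (As j)) /\
  (forall i j, i < q -> j < q -> i <> j -> disjoint (Bs i) (Bs j)) /\
  (forall i j, i < p -> j < q -> disjoint (As i) (Bs j)) /\
  (forall x, exists i, i < p /\ img A (gs i) (As i) x) /\
  (forall x, exists j, j < q /\ img A (ks j) (Bs j) x).

Definition paradoxical_with (X : Type) (A : group_action X) (p q : nat) : Prop :=
  exists As Bs gs ks, paradoxical_decomposition A p q As Bs gs ks.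

Definition paradoxical (X : Type) (A : group_action X) : Prop :=
  exists p q, paradoxical_with A p q.

(* tau(G acting on X) <= N, where tau is the minimal number p+q of pieces
   of a paradoxical decomposition (infinite if none exists). *)
Definition tarski_le (X : Type) (A : group_action X) (N : nat) : Prop :=
  exists p q, p + q <= N /\ paradoxical_with A p q.

(* Main.v *)
Require Import Defs.
From Stdlib Require Import Arith Lia Classical.

Fixpoint Pw (X : Type) (A : group_action X) (hs : nat -> ga_G A) (m j : nat)
  : ga_G A :=
  match m with
  | 0 => ga_one A
  | S m' => ga_mul A (hs (j + m')) (@Pw X A hs m' j)
  end.
Arguments Pw {X A}.

Lemma Pw_split (X : Type) (A : group_action X) (hs : nat -> ga_G A) a b j :
  Pw hs (a + b) j = ga_mul A (Pw hs a (j + b)) (Pw hs b j).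
Proof.
  induction a as [|a IH]; simpl.
  - now rewrite ga_mul1g.
  - rewrite IH, ga_mulA. do 3 f_equal. lia.
Qed.

Lemma act_inv (X : Type) (A : group_action X) g x :
  ga_act A (ga_inv A g) (ga_act A g x) = x.
Proof. now rewrite <- ga_actM, ga_mulVg, ga_act1. Qed.
Arguments act_inv {X A}.

Lemma act_inj (X : Type) (A : group_action X) g x y :
  ga_act A g x = ga_act A g y -> x = y.
Proof.
  intro H. rewrite <- (act_inv g x), <- (act_inv g y). now rewrite H.
Qed.

Lemma chain (X : Type) (A : group_action X) (n : nat)
  (Xs : nat -> X -> Prop) (hs : nat -> ga_G A)
  (Hsub : forall i, i < n -> forall x,
      img A (hs i) (Xs i) x -> Xs (S i mod n) x) :
  forall m j y, j < n -> j + m <= n -> Xs j y ->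
    Xs ((j + m) mod n) (ga_act A (Pw hs m j) y).
Proof.
  induction m as [|m IH]; intros j y Hj Hjm Hy; simpl.
  - rewrite Nat.add_0_r, Nat.mod_small by lia. now rewrite ga_act1.
  - rewrite ga_actM.
    replace (j + S m) with (S (j + m)) by lia.
    apply Hsub; [lia|].
    exists (ga_act A (Pw hs m j) y). split; [|reflexivity].
    specialize (IH j y Hj ltac:(lia) Hy).
    now rewrite Nat.mod_small in IH by lia.
Qed.

Theorem mainTheorem13 (X : Type) (A : group_action X) (n : nat)
  (Xs : nat -> X -> Prop) (hs : nat -> ga_G A)
  (Hsub : forall i, i < n -> forall x,
      img A (hs i) (Xs i) x -> Xs (S i mod n) x)
  (Hcov : forall x, exists i, i < n /\
      Xs (S i mod n) x /\ ~ img A (hs i) (Xs i) x) :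
  paradoxical A /\ tarski_le A (n + 2).
Proof.
  pose (Y := fun i z => Xs (S i mod n) z /\ ~ img A (hs i) (Xs i) z).
  pose (w := fun i => Pw hs (n - 1 - i) (S i)).
  pose (F := Pw hs n 0).
  pose (As := fun i => img A (w i) (Y i)).
  pose (Bs := fun j => match j with
                       | 0 => img A F (Xs 0)
                       | _ => fun x => ~ Xs 0 x end).
  pose (gs := fun i => ga_inv A (w i)).
  pose (ks := fun j => match j with 0 => ga_inv A F | _ => ga_one A end).
  assert (HC := @chain X A n Xs hs Hsub).
  assert (HA0 : forall i x, i < n -> As i x -> Xs 0 x).
  { intros i x Hi [z [[Hz _] ->]]. unfold w.
    destruct (Nat.eq_dec i (n - 1)) as [E|E].
    - replace (n - 1 - i) with 0 by lia. simpl. rewrite ga_act1.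
      replace (S i) with n in Hz by lia. now rewrite Nat.Div0.mod_same in Hz by lia.
    - rewrite Nat.mod_small in Hz by lia.
      pose proof (HC (n - 1 - i) (S i) z ltac:(lia) ltac:(lia) Hz) as H.
      replace (S i + (n - 1 - i)) with n in H by lia.
      now rewrite Nat.Div0.mod_same in H by lia. }
  assert (HF0 : forall x, Bs 0 x -> Xs 0 x).
  { intros x [y [Hy ->]].
    destruct n as [|n'].
    - destruct (Hcov y) as [i [Hi _]]. lia.
    - pose proof (HC (S n') 0 y ltac:(lia) ltac:(lia) Hy) as H.
      rewrite Nat.add_0_l in H. now rewrite Nat.Div0.mod_same in H by lia. }
  assert (Hpd : paradoxical_decomposition A n 2 As Bs gs ks).
  { split; [|split; [|split; [|split]]].
    -
      assert (K : forall i j, i < j -> j < n -> disjoint (As i) (As j)).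
      { intros i j Hij Hj x [z [[Hz _] ->]] [z' [[_ Hz'] E]].
        apply Hz'. unfold w in E.
        replace (n - 1 - i) with ((n - 1 - j) + (j - i)) in E by lia.
        rewrite Pw_split, ga_actM in E.
        replace (S i + (j - i)) with (S j) in E by lia.
        apply act_inj in E. subst z'.
        replace (j - i) with (S (j - i - 1)) by lia. simpl.
        rewrite ga_actM.
        eexists; split; [|f_equal; f_equal; lia].
        rewrite Nat.mod_small in Hz by lia.
        pose proof (HC (j - i - 1) (S i) z ltac:(lia) ltac:(lia) Hz) as H.
        replace (S i + (j - i - 1)) with j in H by lia.
        now rewrite Nat.mod_small in H by lia. }
      intros i j Hi Hj Hne x H1 H2.
      destruct (Nat.lt_total i j) as [L|[L|L]]; [|lia|].
      + exact (K i j L Hj x H1 H2).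
      + exact (K j i L Hi x H2 H1).
    - intros i j Hi Hj Hne x H1 H2.
      destruct i as [|[|]]; destruct j as [|[|]]; try lia.
      + exact (H2 (HF0 x H1)).
      + exact (H1 (HF0 x H2)).
    - intros i j Hi Hj x H1 H2.
      destruct j as [|[|]]; try lia.
      + destruct H1 as [z [[_ Hz'] E1]]. destruct H2 as [y [Hy E2]].
        apply Hz'. rewrite E1 in E2. unfold w, F in E2.
        replace n with ((n - 1 - i) + S i) in E2 at 2 by lia.
        rewrite Pw_split, ga_actM in E2. simpl in E2.
        apply act_inj in E2. subst z.
        rewrite ?Nat.add_0_r, ga_actM.
        eexists; split; [|reflexivity].
        pose proof (HC i 0 y ltac:(lia) ltac:(lia) Hy) as H.
        now rewrite Nat.mod_small in H by lia.
      + exact (H2 (HA0 i x Hi H1)).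
    - intros x. destruct (Hcov x) as [i [Hi HY]].
      exists i. split; [exact Hi|].
      exists (ga_act A (w i) x). split.
      + exists x. split; [exact HY|reflexivity].
      + unfold gs. now rewrite act_inv.
    - intros x. destruct (classic (Xs 0 x)) as [H|H].
      + exists 0. split; [lia|].
        exists (ga_act A F x). split.
        * exists x. split; [exact H|reflexivity].
        * simpl. now rewrite act_inv.
      + exists 1. split; [lia|].
        exists x. split; [exact H|]. simpl. now rewrite ga_act1. }
  split.
  - exists n, 2, As, Bs, gs, ks. exact Hpd.
  - exists n, 2. split; [lia|]. exists As, Bs, gs, ks. exact Hpd.
Qed.
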